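(* Let $\mathcal{P}\subset\mathbb{R}^d$ be a finite set of $n$ item vectors, $\bm{q}\in\mathbb{R}^d$ a query vector, $k>1$ an integer with $k\le n$, $\lambda\in[0,1]$ and $\mu>0$, and assume $\langle \bm{x},\bm{y}\rangle\ge 0$ for all $\bm{x},\bm{y}\in\mathcal{P}\cup\{\bm{q}\}$. Let $f$ denote either $f_{avg}$ or $f_{max}$ (defined in the context), and let $\mathcal{S}^*\in\arg\max_{\mathcal{T}\subseteq\mathcal{P},|\mathcal{T}|=k} f(\mathcal{T})$. Let $\mathcal{S}$ be the output of the Greedy algorithm run with this $f$, and let $\mathcal{S}'$ be a $k$MIPS result for $\bm{q}$, i.e., a set of $k$ vectors of $\mathcal{P}$ such that $\langle \bm{p},\bm{q}\rangle\ge\langle \bm{p}',\bm{q}\rangle$ for all $\bm{p}\in\mathcal{S}'$, $\bm{p}'\in\mathcal{P}\setminus\mathcal{S}'$. Define $\overline{f}(\mathcal{T}) := \frac{\lambda}{k}\sum_{\bm{p}\in\mathcal{T}}\langle \bm{p},\bm{q}\rangle$, and let $div^* = \max_{\mathcal{T}\subseteq\mathcal{P},|\mathcal{T}|=k}\frac{2\mu(1-\lambda)}{k(k-1)}\sum_{\{\bm{p}_x,\bm{p}_y\}\subseteq\mathcal{T},\,\bm{p}_x\ne\bm{p}_y}\langle\bm{p}_x,\bm{p}_y\rangle$ if $f=f_{avg}$, and $div^*=\max_{\bm{p}_x\neq\bm{p}_y\in\mathcal{P}}\mu(1-\lambda)\langle\bm{p}_x,\bm{p}_y\rangle$ if $f=f_{max}$.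 Suppose $f(\mathcal{S}')>0$. Then $$f(\mathcal{S})\ \ge\ \max\!\Big(\tfrac{f(\mathcal{S}')}{\overline{f}(\mathcal{S}')}\cdot f(\mathcal{S}^* ),\ f(\mathcal{S}^* )-div^*\Big)-\Delta',\qquad\text{where } \Delta'=\max\big(0,\ f(\mathcal{S}')-f(\mathcal{S})\big).$$
   Context: For $\mathcal{S}\subseteq\mathcal{P}$ define $f_{avg}(\mathcal{S}) = \frac{\lambda}{k}\sum_{\bm{p}\in\mathcal{S}}\langle\bm{p},\bm{q}\rangle - \frac{2\mu(1-\lambda)}{k(k-1)}\sum_{\{\bm{p},\bm{p}'\}\subseteq\mathcal{S},\,\bm{p}\neq\bm{p}'}\langle\bm{p},\bm{p}'\rangle$ (sum over unordered pairs of distinct elements), and $f_{max}(\mathcal{S}) = \frac{\lambda}{k}\sum_{\bm{p}\in\mathcal{S}}\langle\bm{p},\bm{q}\rangle - \mu(1-\lambda)\max_{\bm{p}\neq\bm{p}'\in\mathcal{S}}\langle\bm{p},\bm{p}'\rangle$, where a maximum over an empty collection of pairs is taken to be $0$. Marginal gains: $\Delta_{f_{avg}}(\bm{p},\mathcal{S}) = \frac{\lambda}{k}\langle\bm{p},\bm{q}\rangle - \frac{2\mu(1-\lambda)}{k(k-1)}\sum_{\bm{p}'\in\mathcal{S}}\langle\bm{p},\bm{p}'\rangle$ and $\Delta_{f_{max}}(\bm{p},\mathcal{S}) = \frac{\lambda}{k}\langle\bm{p},\bm{q}\rangle - \mu(1-\lambda)\big(\max_{\bm{p}_x\ne\bm{p}_y\in\mathcal{S}\cup\{\bm{p}\}}\langle\bm{p}_x,\bm{p}_y\rangle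 - \max_{\bm{p}_x\ne\bm{p}_y\in\mathcal{S}}\langle\bm{p}_x,\bm{p}_y\rangle\big)$ (same empty-max convention). Greedy algorithm: set $\mathcal{S}=\{\bm{p}^*\}$ with $\bm{p}^*\in\arg\max_{\bm{p}\in\mathcal{P}}\langle\bm{p},\bm{q}\rangle$; then for $i=2,\dots,k$, choose $\bm{p}^*\in\arg\max_{\bm{p}\in\mathcal{P}\setminus\mathcal{S}}\Delta_f(\bm{p},\mathcal{S})$ and set $\mathcal{S}\leftarrow\mathcal{S}\cup\{\bm{p}^*\}$ (ties broken arbitrarily); output $\mathcal{S}$. *)

(* Defs.v *)
From mathcomp Require Import all_boot all_order all_algebra.
Set Implicit Arguments. Unset Strict Implicit. Unset Printing Implicit Defensive.
Import Order.TTheory GRing.Theory Num.Theory.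
Local Open Scope ring_scope.

Section Defs.
Variables (R : realFieldType) (d n : nat).
Implicit Types (x y : 'rV[R]_d) (S T : {set 'I_n}).

Definition dot x y : R := \sum_(i < d) x 0 i * y 0 i.

(* maximum of a finite list of reals; 0 for the empty list
   (the paper's convention for empty maxima). *)
Definition seqmax (l : seq R) : R := foldr Num.max (head 0 l) l.

Variables (v : 'I_n -> 'rV[R]_d) (q : 'rV[R]_d) (k : nat) (lam mu : R).

Definition fbar S : R := lam / k%:R * \sum_(p in S) dot (v p) q.

Definition pairsum S : R :=
  \sum_(x in S) \sum_(y in S | (x < y)%N) dot (v x) (v y).

Definition pairmax S : R :=
  seqmax [seq dot (v xy.1) (v xy.2) | xy <- enum (setX S S) & xy.1 != xy.2].

Definition f_avg S : R :=
  fbar S - 2 * mu * (1 - lam) / (k%:R * (k%:R - 1)) * pairsum S.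

Definition f_max S : R := fbar S - mu * (1 - lam) * pairmax S.

Definition gain_avg p S : R :=
  lam / k%:R * dot (v p) q
  - 2 * mu * (1 - lam) / (k%:R * (k%:R - 1)) * \sum_(p' in S) dot (v p) (v p').

Definition gain_max p S : R :=
  lam / k%:R * dot (v p) q - mu * (1 - lam) * (pairmax (p |: S) - pairmax S).

Inductive objective := Avg | Max.

Definition fobj (o : objective) S : R :=
  match o with Avg => f_avg S | Max => f_max S end.

Definition gain (o : objective) p S : R :=
  match o with Avg => gain_avg p S | Max => gain_max p S end.

Definition divstar (o : objective) : R :=
  match o with
  | Avg => seqmax [seq 2 * mu * (1 - lam) / (k%:R * (k%:R - 1)) * pairsum T
                   | T <- enum [set T : {set 'I_n} | #|T| == k]]
  | Max => mu * (1 - lam) * pairmax [set: 'I_n]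
  end.

(* s = (p_1,...,p_k) is a possible run of the Greedy algorithm (ties broken
   arbitrarily): p_1 maximizes <p,q> over P, and p_{i+1} maximizes
   gain(p, {p_1..p_i}) over P \ {p_1..p_i}. *)
Definition greedy_run (o : objective) (s : k.-tuple 'I_n) : Prop :=
  forall i : 'I_k,
    let Si := [set tnth s j | j : 'I_k & (j < i)%N] in
    tnth s i \notin Si /\
    (if (i == 0 :> nat)
     then forall p, dot (v p) q <= dot (v (tnth s i)) q
     else forall p, p \notin Si -> gain o p Si <= gain o (tnth s i) Si).

Definition greedy_output (o : objective) S : Prop :=
  exists s : k.-tuple 'I_n, greedy_run o s /\ S = [set x in s].

Definition kMIPS S : Prop :=
  #|S| = k /\ forall p p', p \in S -> p' \notin S -> dot (v p') q <= dot (v p) q.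

End Defs.

(* Main.v *)
Require Import Defs.
From mathcomp Require Import all_boot all_order all_algebra.
From mathcomp Require Import ring lra.
Import Order.TTheory GRing.Theory Num.Theory.
Local Open Scope ring_scope.

Lemma swap_sum (R : realFieldType) (T : finType) (F : T -> R) (A B : {set T}) :
  #|A| = #|B| -> (forall x y, x \in A -> y \in B -> F x <= F y) ->
  \sum_(x in A) F x <= \sum_(y in B) F y.
Proof.
move=> hc hle.
have h : \sum_(y in B) \sum_(x in A) F x <= \sum_(y in B) \sum_(x in A) F y.
  by apply: ler_sum => y yB; apply: ler_sum => x xA; exact: hle.
rewrite (sumr_const (mem B)) in h.
rewrite [X in _ <= X](eq_bigr (fun y => F y *+ #|A|)) in h; last by move=> y _; rewrite sumr_const.
rewrite sumrMnl hc in h.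
case: (posnP #|B|) => [B0|Bp].
  move: hc; rewrite B0 => /eqP; rewrite cards_eq0 => /eqP ->.
  move/eqP: B0; rewrite cards_eq0 => /eqP ->.
  by rewrite !big_set0.
by rewrite lerMn2r gtn_eqF in h.
Qed.

Lemma foldr_max_ge (R : realFieldType) (l : seq R) a x :
  x \in l -> x <= foldr Num.max a l.
Proof.
elim: l => //= y l IH; rewrite inE => /orP [/eqP ->|/IH h].
  by rewrite le_max lexx.
by rewrite le_max h orbT.
Qed.

Lemma foldr_max_le (R : realFieldType) (l : seq R) a M :
  a <= M -> (forall x, x \in l -> x <= M) -> foldr Num.max a l <= M.
Proof.
move=> ha; elim: l => //= y l IH hl.
rewrite ge_max hl ?mem_head //= IH // => x xl; apply: hl; by rewrite inE xl orbT.
Qed.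

Lemma seqmax_ge (R : realFieldType) (l : seq R) x : x \in l -> x <= seqmax l.
Proof. exact: foldr_max_ge. Qed.

Lemma seqmax_ge0 (R : realFieldType) (l : seq R) :
  (forall x, x \in l -> 0 <= x) -> 0 <= seqmax l.
Proof.
case: l => [|y l] h; first by rewrite /seqmax.
apply: le_trans (h y (mem_head _ _)) _; apply: seqmax_ge; exact: mem_head.
Qed.

Lemma seqmax_le (R : realFieldType) (l : seq R) M :
  0 <= M -> (forall x, x \in l -> x <= M) -> seqmax l <= M.
Proof.
case: l => [|y l] h0 h; first by rewrite /seqmax.
by apply: foldr_max_le => //; apply: h; exact: mem_head.
Qed.

Lemma pairmax_ge0 (R : realFieldType) d n (v : 'I_n -> 'rV[R]_d) T :
  (forall x y : 'I_n, 0 <= dot (v x) (v y)) -> 0 <= pairmax v T.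
Proof.
move=> h; apply: seqmax_ge0 => x /mapP [xy _ ->]; exact: h.
Qed.

Lemma pairmax_sub (R : realFieldType) d n (v : 'I_n -> 'rV[R]_d) T :
  (forall x y : 'I_n, 0 <= dot (v x) (v y)) -> pairmax v T <= pairmax v [set: 'I_n].
Proof.
move=> h; apply: seqmax_le; first exact: pairmax_ge0.
move=> x /mapP [xy]; rewrite mem_filter => /andP [ne _] ->.
apply: seqmax_ge; apply: map_f; rewrite mem_filter ne /= mem_enum.
by case: xy ne => a b _; rewrite in_setX !inE.
Qed.

Lemma pairsum_ge0 (R : realFieldType) d n (v : 'I_n -> 'rV[R]_d) T :
  (forall x y : 'I_n, 0 <= dot (v x) (v y)) -> 0 <= pairsum v T.
Proof.
move=> h; apply: sumr_ge0 => x _; apply: sumr_ge0 => y _; exact: h.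
Qed.

Theorem theorem1 (R : realFieldType) (d n k : nat)
    (v : 'I_n -> 'rV[R]_d) (q : 'rV[R]_d) (lam mu : R) (o : objective)
    (Sstar S S' : {set 'I_n}) :
  injective v -> (1 < k)%N -> (k <= n)%N ->
  0 <= lam -> lam <= 1 -> 0 < mu ->
  (forall x y : 'I_n, 0 <= dot (v x) (v y)) ->
  (forall x : 'I_n, 0 <= dot (v x) q) -> 0 <= dot q q ->
  #|Sstar| = k ->
  (forall T : {set 'I_n}, #|T| = k -> fobj v q k lam mu o T <= fobj v q k lam mu o Sstar) ->
  greedy_output v q k lam mu o S ->
  kMIPS v q k S' ->
  0 < fobj v q k lam mu o S' ->
  Num.max (fobj v q k lam mu o S' / fbar v q k lam S' * fobj v q k lam mu o Sstar)
          (fobj v q k lam mu o Sstar - divstar v k lam mu o)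
    - Num.max 0 (fobj v q k lam mu o S' - fobj v q k lam mu o S)
  <= fobj v q k lam mu o S.
Proof.
move=> _ k1 _ lam0 lam1 mu0 hvv hvq _ cS _ _ [cS' hM] fpos.
have kR : 1 < (k%:R : R) by rewrite ltr1n.
have fbarle : fbar v q k lam Sstar <= fbar v q k lam S'.
  rewrite /fbar; apply: ler_wpM2l; first by apply: divr_ge0 => //; lra.
  rewrite (big_setID S') [X in _ <= X](big_setID Sstar) /= setIC lerD2l.
  apply: swap_sum.
    apply/eqP; rewrite -(eqn_add2l #|S' :&: Sstar|).
    by rewrite {1}setIC cardsID cardsID cS cS'.
  move=> x y; rewrite !inE => /andP [xS' _] /andP [_ yS']; exact: hM.
set F := fobj v q k lam mu o in fpos *.
have [D [hD D0 Ddiv]] : exists D : {set 'I_n} -> R,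
   [/\ forall T, F T = fbar v q k lam T - D T, forall T, 0 <= D T &
       D S' <= divstar v k lam mu o].
  have c0 : 0 <= 2 * mu * (1 - lam) / (k%:R * (k%:R - 1)).
    apply: divr_ge0; first by apply: mulr_ge0; lra.
    by apply: mulr_ge0; lra.
  rewrite /F; destruct o; simpl.
    exists (fun T => 2 * mu * (1 - lam) / (k%:R * (k%:R - 1)) * pairsum v T); split.
    - by [].
    - by move=> T; apply: mulr_ge0 => //; exact: pairsum_ge0.
    - apply: seqmax_ge; apply: map_f; by rewrite mem_enum inE cS'.
  exists (fun T => mu * (1 - lam) * pairmax v T); split.
  - by [].
  - by move=> T; apply: mulr_ge0; [apply: mulr_ge0; lra | exact: pairmax_ge0].
  - apply: ler_wpM2l; first by apply: mulr_ge0; lra.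
    exact: pairmax_sub.
have h1 := D0 Sstar; have h2 := D0 S'; have h3 := hD Sstar; have h4 := hD S'.
have fbpos : 0 < fbar v q k lam S' by lra.
have A : F S' / fbar v q k lam S' * F Sstar <= F S'.
  apply: (@le_trans _ _ (F S' / fbar v q k lam S' * fbar v q k lam S')).
    apply: ler_wpM2l; last lra.
    by apply: mulr_ge0; [lra | rewrite invr_ge0; lra].
  by rewrite divfK // lt0r_neq0.
have B : F Sstar - divstar v k lam mu o <= F S' by lra.
have C : F S' - F S <= Num.max 0 (F S' - F S) by rewrite le_max lexx orbT.
have : Num.max (F S' / fbar v q k lam S' * F Sstar) (F Sstar - divstar v k lam mu o) <= F S'
  by rewrite ge_max A B.
lra.
Qed.
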